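(* Let $G=(V,E)$ be a graph with a partition $(V_1,V_2)$ of $V$ such that $G[V_1]$ and $G[V_2]$ are $P_5$-free, and let $k$ be an integer. Suppose that $k\ge 1$, that $G$ contains a $P_5$, that every vertex of $G$ lies on some $P_5$ in $G$, and that every $P_5$ in $G$ contains at least $4$ vertices of $V_2$. Let $v\in V_2$ be an isolated vertex of $G[V_2]$, and let $F\subseteq V_2$ be a set such that $G\setminus F$ is $P_5$-free and $v\in F$. Then there exists a set $F'\subseteq V_2$ such that $G\setminus F'$ is $P_5$-free, $v\notin F'$, and $|F'|\le |F|$.
   Context: Graphs are finite, simple and undirected. A $P_5$ is a path on $5$ vertices (as a not necessarily induced subgraph); a graph is $P_5$-free if it contains no $P_5$. $G[X]$ denotes the subgraph induced by $X$, and $G\setminus F=G[V\setminus F]$. *)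

(* Defs.v *)
From mathcomp Require Import all_boot.
Set Implicit Arguments. Unset Strict Implicit. Unset Printing Implicit Defensive.

(* A finite simple graph: vertex set a finType T, adjacency e : rel T that is
   symmetric and irreflexive (these are hypotheses of the theorem). *)

(* p is a (not necessarily induced) path on 5 distinct vertices in the graph
   with adjacency e: p = [:: x1; x2; x3; x4; x5], x_i pairwise distinct,
   x_i adjacent to x_(i+1). *)
Definition is_P5 (T : eqType) (e : rel T) (p : seq T) : bool :=
  [&& size p == 5, uniq p &
      (if p is x :: s then path e x s else false)].

Definition P5_free_in (T : finType) (e : rel T) (X : {set T}) : Prop :=
  forall p : seq T, is_P5 e p -> ~ {subset p <= X}.

(* Main.v *)
Require Import Defs.
From mathcomp Require Import all_boot.
From Stdlib Require Import Classical.
Set Implicit Arguments. Unset Strict Implicit.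

Lemma P5E (T : eqType) (e : rel T) x1 x2 x3 x4 x5 :
  is_P5 e [:: x1;x2;x3;x4;x5] = [&& uniq [:: x1;x2;x3;x4;x5], e x1 x2, e x2 x3, e x3 x4 & e x4 x5].
Proof. by rewrite /is_P5 /= !andbT. Qed.

Lemma P5_size (T : eqType) (e : rel T) p : is_P5 e p -> exists x1 x2 x3 x4 x5, p = [:: x1;x2;x3;x4;x5].
Proof. case/and3P; case: p => [|x1 [|x2 [|x3 [|x4 [|x5 [|? ?]]]]]] //= *; by exists x1,x2,x3,x4,x5. Qed.

Lemma uniq5 (T : eqType) (x1 x2 x3 x4 x5 : T) :
  uniq [:: x1; x2; x3; x4; x5] <->
  [/\ x1 != x2, x1 != x3, x1 != x4, x1 != x5 &
   [/\ x2 != x3, x2 != x4, x2 != x5, x3 != x4 &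
   [/\ x3 != x5 & x4 != x5]]].
Proof.
rewrite /= !inE !negb_or andbT; split.
  by move=> /andP[/and4P[? ? ? ?] /andP[/and3P[? ? ?] /andP[/andP[? ?] ?]]].
move=> [? ? ? ? [? ? ? ? [? ?]]]; apply/andP; split; first by apply/and4P.
apply/andP; split; first by apply/and3P.
by apply/andP; split => //; apply/andP.
Qed.

Section S.
Variables (T : finType) (e : rel T) (e_sym : symmetric e) (V2 : {set T}).
Variable (h4 : forall p, is_P5 e p -> 4 <= count (fun x => x \in V2) p).
Variables (v : T) (hvV2 : v \in V2) (hviso : forall u, u \in V2 -> ~~ e v u).

Lemma nbV u : e v u -> u \notin V2.
Proof. by move=> h; apply/negP => /hviso; rewrite h. Qed.
Lemma nbV' u : e u v -> u \notin V2.
Proof. by rewrite e_sym; apply: nbV. Qed.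

Lemma key p : is_P5 e p -> v \in p -> exists a b c d,
  is_P5 e [:: v; a; b; c; d] /\ p =i [:: v; a; b; c; d].
Proof.
move=> hp; have hc := h4 hp; have [x1 [x2 [x3 [x4 [x5 E]]]]] := P5_size hp; subst p; move: hp hc.
rewrite P5E => /and5P [hu h12 h23 h34 h45] hc hv.
move: hc; rewrite /=.
rewrite !inE in hv.
move: hv => /orP[/eqP E|/orP[/eqP E|/orP[/eqP E|/orP[/eqP E|/eqP E]]]].
- subst x1; move=> _; exists x2, x3, x4, x5; split => //; rewrite P5E; by apply/and5P.
- subst x2; by rewrite hvV2 (negbTE (nbV h23)) (negbTE (nbV' h12)); do 2! case: (_ \in V2).
- subst x3; by rewrite hvV2 (negbTE (nbV h34)) (negbTE (nbV' h23)); do 2! case: (_ \in V2).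
- subst x4; by rewrite hvV2 (negbTE (nbV h45)) (negbTE (nbV' h34)); do 2! case: (_ \in V2).
- subst x5; move=> _; exists x4, x3, x2, x1; split.
  + rewrite P5E (e_sym v x4) (e_sym x4 x3) (e_sym x3 x2) (e_sym x2 x1) h12 h23 h34 h45 !andbT.
    have : uniq (rev [:: x1; x2; x3; x4; v]) by rewrite rev_uniq.
    exact.
  + move=> y; rewrite !inE; by case: (y == x1); case: (y == x2); case: (y == x3); case: (y == x4); case: (y == v).
Qed.
Lemma cnt a b c d : is_P5 e [:: v; a; b; c; d] ->
  [/\ a \notin V2, b \in V2, c \in V2 & d \in V2].
Proof.
move=> hp; have := h4 hp; move: hp; rewrite P5E => /and5P [_ hva _ _ _] /=.
rewrite hvV2 (negbTE (nbV hva)).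
by case: (b \in V2); case: (c \in V2); case: (d \in V2).
Qed.
End S.


Theorem lemma3 (T : finType) (e : rel T)
  (e_sym : symmetric e) (e_irr : irreflexive e)
  (V1 V2 : {set T})
  (hdisj : V1 :&: V2 = set0) (hcov : V1 :|: V2 = [set: T])
  (hV1 : P5_free_in e V1) (hV2 : P5_free_in e V2)
  (k : nat) (hk : 1 <= k)
  (hP5 : exists p, is_P5 e p)
  (hcover : forall x : T, exists p, is_P5 e p /\ x \in p)
  (h4 : forall p, is_P5 e p -> 4 <= count (fun x => x \in V2) p)
  (v : T) (hvV2 : v \in V2) (hviso : forall u, u \in V2 -> ~~ e v u)
  (F : {set T}) (hFV2 : F \subset V2) (hF : P5_free_in e (~: F)) (hvF : v \in F) :
  exists F' : {set T},
    [/\ F' \subset V2, P5_free_in e (~: F'), v \notin F' & #|F'| <= #|F|].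
Proof.
have notF x : x \notin V2 -> x \notin F.
  by apply: contra => /(subsetP hFV2).
have hcard : #|F| = #|F :\ v|.+1 by rewrite (cardsD1 v F) hvF.
case: (classic (P5_free_in e (~: (F :\ v)))) => hfree.
  exists (F :\ v); split => //.
  - by apply: subset_trans hFV2; apply: subsetDl.
  - by rewrite !inE eqxx.
  - by rewrite hcard.
have [p0 [hp0 hs0]] : exists p, is_P5 e p /\ {subset p <= ~: (F :\ v)}.
  apply: NNPP => hn; apply: hfree => p hp hs; apply: hn; by exists p.
have hvp0 : v \in p0.
  apply: NNPP => hv; apply: (hF p0 hp0) => x hx.
  have := hs0 x hx; rewrite !inE negb_and negbK => /orP[/eqP ex|] //.
  by rewrite -ex hx in hv.
have [a [b [c [d [hP hE]]]]] := key e_sym h4 hvV2 hviso hp0 hvp0.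
have [haV hbV hcV hdV] := cnt h4 hvV2 hviso hP.
have hbF : b \notin F :\ v.
  by have := hs0 b; rewrite hE !inE eqxx !orbT => /(_ isT).
have hbv : b != v.
  by move: hP; rewrite P5E /= !inE => /andP[/andP[hu _] _]; apply: contraNneq hu => ->; rewrite eqxx !orbT.
have hbF' : b \notin F by move: hbF; rewrite !inE hbv.
exists (b |: (F :\ v)); split.
- by rewrite subUset sub1set hbV; apply: subset_trans hFV2; apply: subsetDl.
- move=> q hq hsq.
  have hbq : b \notin q.
    by apply/negP => /hsq; rewrite !inE eqxx.
  have hxF x : x \in q -> x != v -> x \notin F.
    move=> /hsq; rewrite !inE negb_or => /andP[_]; rewrite negb_and negbK.
    by case/orP => [/eqP->|//]; rewrite eqxx.
  case: (boolP (v \in q)) => hvq; last first.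
    apply: (hF q hq) => x hx; rewrite inE; apply: hxF => //.
    by apply: contraNneq hvq => <-.
  have [a' [x [y [z [hQ hQE]]]]] := key e_sym h4 hvV2 hviso hq hvq.
  have [ha'V hxV hyV hzV] := cnt h4 hvV2 hviso hQ.
  move: (hP); rewrite P5E => /and5P [/uniq5 [hva hvb hvc hvd [hab hac had hbc [hbd hcd]]] hea heb hec hed].
  move: (hQ); rewrite P5E => /and5P [/uniq5 [hva' hvx hvy hvz [ha'x ha'y ha'z hxy [hxz hyz]]] hea' hex hey hez].
  have ea : a' = a.
    apply: NNPP => hne.
    have hP' : is_P5 e [:: c; b; a; v; a'].
      rewrite P5E (e_sym c b) hec (e_sym b a) heb (e_sym a v) hea hea' !andbT.
      have nV u w : u \in V2 -> w \notin V2 -> u != w.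
        by move=> h1 h2; apply: contraNneq h2 => <-.
      apply/uniq5; split; [by rewrite eq_sym | by rewrite eq_sym | by rewrite eq_sym | exact: nV | ].
      split; [by rewrite eq_sym | by rewrite eq_sym | exact: nV | by rewrite eq_sym | ].
      split; last exact: nV.
      by apply/eqP => /esym.
    have := h4 _ hP'; rewrite /= hcV hbV hvV2 (negbTE haV) (negbTE ha'V) //.
  subst a'.
  have hbx : b != x by apply: contraNneq hbq => ->; rewrite hQE !inE eqxx !orbT.
  have hby : b != y by apply: contraNneq hbq => ->; rewrite hQE !inE eqxx !orbT.
  have hbz : b != z by apply: contraNneq hbq => ->; rewrite hQE !inE eqxx !orbT.
  have hP2 : is_P5 e [:: b; a; x; y; z].
    rewrite P5E (e_sym b a) heb hex hey hez !andbT.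
    by apply/uniq5; split => //; rewrite eq_sym.
  apply: (hF _ hP2) => w; rewrite !inE => /orP[/eqP->|/orP[/eqP->|/orP[/eqP->|/orP[/eqP->|/eqP->]]]] //.
  - exact: notF.
  - by apply: hxF; [rewrite hQE !inE eqxx ?orbT | rewrite eq_sym].
  - by apply: hxF; [rewrite hQE !inE eqxx ?orbT | rewrite eq_sym].
  - by apply: hxF; [rewrite hQE !inE eqxx ?orbT | rewrite eq_sym].

- by rewrite !inE eqxx eq_sym (negbTE hbv).
- by rewrite cardsU1 hbF hcard.
Qed.
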